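(* Let $\mathcal{U}_{w,F}$ be a folded ribbon $3$-stick unknot with ribbon linking number $\operatorname{Lk}(\mathcal{U}_{w,F})=\pm1$, and assume $\operatorname{Len}(\mathcal{U})=1$. Then the ribbon width satisfies $w\le \frac{1}{\sqrt3}$, and the width achieves its maximum value $\frac1{\sqrt3}$ when $\mathcal{U}$ is an equilateral triangle.
   Context: A folded ribbon $3$-stick unknot corresponds to an unknot diagram $\mathcal{U}$ with three edges forming a non-degenerate triangle. For width $w>0$, $\mathcal{U}_{w,F}$ is a flat strip of width $w$ centred on $\mathcal{U}$ (boundary parallel to and at distance $w/2$ from each edge), folded at each vertex along a fold line through the vertex perpendicular to the bisector of the angle there; it is a piecewise-linear immersion of a Möbius band into the plane whose only singularities are the pairwise disjoint fold lines (this constrains how large $w$ can be for a given triangle); the folding information $F$ records which layer lies on top at each fold. The ribbon linking number $\operatorname{Lk}(\mathcal{U}_{w,F})$ is one half the sum of the signs (right-hand rule) of the crossings between the oriented diagram and the ribbon's boundary curve. Linking number $\pm1$ corresponds to one of the three folds being of a different over/under type from the other two. *)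

(* Defs.v *)
From Stdlib Require Import Reals ZArith.
Open Scope R_scope.

Definition pt := (R * R)%type.
Definition vsub (p q : pt) : pt := (fst p - fst q, snd p - snd q).
Definition cross (u v : pt) : R := fst u * snd v - snd u * fst v.
Definition norm (u : pt) : R := sqrt (fst u ^ 2 + snd u ^ 2).
Definition dist (p q : pt) : R := norm (vsub p q).

Definition nondegenerate (A B C : pt) : Prop := cross (vsub B A) (vsub C A) <> 0.

Definition Len (A B C : pt) : R := dist A B + dist B C + dist C A.

Definition equilateral (A B C : pt) : Prop := dist A B = dist B C /\ dist B C = dist C A.

Definition unit_to (V P : pt) : pt :=
  let u := vsub P V in (fst u / norm u, snd u / norm u).

Definition bisector (V P Q : pt) : pt :=
  (fst (unit_to V P) + fst (unit_to V Q), snd (unit_to V P) + snd (unit_to V Q)).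

Definition fold_dir (V P Q : pt) : pt :=
  let b := bisector V P Q in (- snd b, fst b).

Definition dist_to_line (X V P : pt) : R :=
  Rabs (cross (vsub P V) (vsub X V)) / norm (vsub P V).

(* The fold line (segment) of the ribbon of width w at vertex V, whose
   neighbouring vertices are P and Q: the points of the line through V
   perpendicular to the angle bisector that lie in the ribbon, i.e. within
   distance w/2 of the two edge lines VP and VQ. *)
Definition fold_segment (w : R) (V P Q : pt) (X : pt) : Prop :=
  (exists t : R, X = (fst V + t * fst (fold_dir V P Q), snd V + t * snd (fold_dir V P Q)))
  /\ dist_to_line X V P <= w / 2 /\ dist_to_line X V Q <= w / 2.

(* U_{w,F} is a well-defined folded ribbon: w > 0 and the three fold lines
   are pairwise disjoint. *)
Definition folded_ribbon_ok (A B C : pt) (w : R) : Prop :=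
  0 < w /\
  (forall X, ~ (fold_segment w A C B X /\ fold_segment w B A C X)) /\
  (forall X, ~ (fold_segment w B A C X /\ fold_segment w C B A X)) /\
  (forall X, ~ (fold_segment w C B A X /\ fold_segment w A C B X)).

(* Folding information: the over/under type of the fold at A, B, C. *)
Definition folding := (bool * bool * bool)%type.
Definition fold_sign (b : bool) : Z := if b then 1%Z else (-1)%Z.

(* Ribbon linking number: each fold contributes +-1 according to its type
   (so Lk = +-3 when all folds agree, +-1 when exactly one differs). *)
Definition ribbon_Lk (F : folding) : Z :=
  let '(fA, fB, fC) := F in (fold_sign fA + fold_sign fB + fold_sign fC)%Z.

(* Main.v *)
Require Import Defs.
From Stdlib Require Import Reals ZArith Lra Psatz.
Open Scope R_scope.

Lemma norm_sq (u : pt) : norm u * norm u = fst u ^ 2 + snd u ^ 2.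
Proof. unfold norm. apply sqrt_sqrt. nra. Qed.

Lemma norm_ge0 (u : pt) : 0 <= norm u.
Proof. unfold norm. apply sqrt_pos. Qed.

Lemma norm_sym (P Q : pt) : norm (vsub P Q) = norm (vsub Q P).
Proof. unfold norm, vsub; simpl. f_equal. ring. Qed.

Lemma norm_pos_cross (p q : pt) : cross p q <> 0 -> 0 < norm p.
Proof.
  intros H. destruct (norm_ge0 p) as [h|h]; auto.
  exfalso. apply H. pose proof (norm_sq p) as E. rewrite <- h in E.
  destruct p as [p1 p2]; simpl in *. unfold cross; simpl.
  assert (p1 = 0) by nra. assert (p2 = 0) by nra. subst. ring.
Qed.

Lemma fold_line_eq (V P Q X : pt) (t : R) :
  0 < norm (vsub P V) -> 0 < norm (vsub Q V) ->
  X = (fst V + t * fst (fold_dir V P Q), snd V + t * snd (fold_dir V P Q)) ->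
  cross (vsub P V) (vsub X V) / norm (vsub P V) =
  cross (vsub Q V) (vsub X V) / norm (vsub Q V).
Proof.
  intros Hn Hm ->.
  pose proof (norm_sq (vsub P V)) as En. pose proof (norm_sq (vsub Q V)) as Em.
  unfold fold_dir, bisector, unit_to in *.
  set (n := norm (vsub P V)) in *. set (m := norm (vsub Q V)) in *.
  destruct V as [v1 v2], P as [p1 p2], Q as [q1 q2].
  unfold cross, vsub in *; simpl in *.
  set (a1 := p1 - v1) in *. set (a2 := p2 - v2) in *.
  set (b1 := q1 - v1) in *. set (b2 := q2 - v2) in *.
  transitivity (t * (1 + (a1*b1+a2*b2)/(n*m))).
  - transitivity (t*((a1*a1+a2*a2)/(n*n) + (a1*b1+a2*b2)/(n*m))).
    + field. lra.
    + replace (a1*a1+a2*a2) with (n*n) by (rewrite En; ring). field. lra.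
  - transitivity (t*((b1*b1+b2*b2)/(m*m) + (a1*b1+a2*b2)/(n*m))).
    + replace (b1*b1+b2*b2) with (m*m) by (rewrite Em; ring). field. lra.
    + field. lra.
Qed.

Lemma par_lemma (w1 w2 d1 d2 : R) : d1*d1 + d2*d2 <> 0 -> w1*d2 - w2*d1 = 0 ->
  w1 = (w1*d1+w2*d2)/(d1*d1+d2*d2) * d1 /\ w2 = (w1*d1+w2*d2)/(d1*d1+d2*d2) * d2.
Proof.
  intros H1 H2.
  assert (E1 : w1*(d1*d1+d2*d2) = (w1*d1+w2*d2)*d1).
  { apply Rminus_diag_uniq. replace (w1*(d1*d1+d2*d2) - (w1*d1+w2*d2)*d1) with (d2*(w1*d2-w2*d1)) by ring. rewrite H2; ring. }
  assert (E2 : w2*(d1*d1+d2*d2) = (w1*d1+w2*d2)*d2).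
  { apply Rminus_diag_uniq. replace (w2*(d1*d1+d2*d2) - (w1*d1+w2*d2)*d2) with (-d1*(w1*d2-w2*d1)) by ring. rewrite H2; ring. }
  split.
  - replace ((w1*d1+w2*d2)/(d1*d1+d2*d2) * d1) with ((w1*d1+w2*d2)*d1/(d1*d1+d2*d2)) by (field; auto).
    rewrite <- E1. field; auto.
  - replace ((w1*d1+w2*d2)/(d1*d1+d2*d2) * d2) with ((w1*d1+w2*d2)*d2/(d1*d1+d2*d2)) by (field; auto).
    rewrite <- E2. field; auto.
Qed.

Lemma on_fold_line (V P Q X : pt) (k : R) :
  cross (vsub P V) (vsub Q V) <> 0 ->
  fst X = fst V + k * (norm (vsub Q V) * fst (vsub P V) - norm (vsub P V) * fst (vsub Q V)) ->
  snd X = snd V + k * (norm (vsub Q V) * snd (vsub P V) - norm (vsub P V) * snd (vsub Q V)) ->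
  exists t, X = (fst V + t * fst (fold_dir V P Q), snd V + t * snd (fold_dir V P Q)).
Proof.
  intros HK H1 H2.
  assert (Hn : 0 < norm (vsub P V)) by (eapply norm_pos_cross; eauto).
  assert (Hm : 0 < norm (vsub Q V)).
  { apply (norm_pos_cross _ (vsub P V)). unfold cross in *; lra. }
  pose proof (norm_sq (vsub P V)) as En. pose proof (norm_sq (vsub Q V)) as Em.
  unfold fold_dir, bisector, unit_to in *.
  set (n := norm (vsub P V)) in *. set (m := norm (vsub Q V)) in *.
  destruct X as [x1 x2].
  destruct V as [v1 v2], P as [p1 p2], Q as [q1 q2].
  unfold cross, vsub in *; simpl in *.
  set (a1 := p1 - v1) in *. set (a2 := p2 - v2) in *.
  set (b1 := q1 - v1) in *. set (b2 := q2 - v2) in *.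
  set (d1 := - (a2 / n + b2 / m)). set (d2 := a1 / n + b1 / m).
  set (w1 := k * (m * a1 - n * b1)). set (w2 := k * (m * a2 - n * b2)).
  assert (Hd : d1*d1 + d2*d2 <> 0).
  { intro Z. assert (Z1 : d1 = 0) by nra. assert (Z2 : d2 = 0) by nra.
    apply HK. unfold d1, d2 in *.
    assert (A1 : a1 = n * (a1/n)) by (field; lra).
    assert (A2 : a2 = n * (a2/n)) by (field; lra).
    assert (a1/n = - (b1/m)) by lra. assert (a2/n = - (b2/m)) by lra.
    rewrite A1, A2. rewrite H, H0. field. lra. }
  assert (Hc : w1*d2 - w2*d1 = 0).
  { unfold w1, w2, d1, d2.
    transitivity (k * (m * (a1*a1+a2*a2)/n - n*(b1*b1+b2*b2)/m)).
    + field. lra.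
    + replace (a1*a1+a2*a2) with (n*n) by (rewrite En; ring).
      replace (b1*b1+b2*b2) with (m*m) by (rewrite Em; ring). field; lra. }
  destruct (par_lemma w1 w2 d1 d2 Hd Hc) as [E1 E2].
  exists ((w1*d1+w2*d2)/(d1*d1+d2*d2)).
  f_equal; [rewrite H1 | rewrite H2]; fold w1 w2; [rewrite E1 at 1 | rewrite E2 at 1]; reflexivity.
Qed.

Lemma heron (A B C : pt) :
  let a := norm (vsub C B) in let b := norm (vsub C A) in let c := norm (vsub B A) in
  4 * (cross (vsub B A) (vsub C A))^2 = (a+b+c)*(a+b-c)*(a-b+c)*(-a+b+c).
Proof.
  intros a b c.
  replace ((a+b+c)*(a+b-c)*(a-b+c)*(-a+b+c)) with
    (2*((a*a)*(b*b)+(b*b)*(c*c)+(c*c)*(a*a)) - (a*a)*(a*a) - (b*b)*(b*b) - (c*c)*(c*c)) by ring.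
  unfold a, b, c. rewrite !norm_sq.
  destruct A as [x1 x2], B as [y1 y2], C as [z1 z2]; unfold cross, vsub; simpl. ring.
Qed.

Lemma Rabs_div_pos (x c : R) : 0 < c -> Rabs x / c = Rabs (x / c).
Proof. intros. unfold Rdiv. rewrite Rabs_mult, (Rabs_pos_eq (/c)); auto.
  left; apply Rinv_0_lt_compat; auto. Qed.

Lemma both_lines (A B C X : pt) (t s : R) :
  nondegenerate A B C ->
  X = (fst A + t * fst (fold_dir A C B), snd A + t * snd (fold_dir A C B)) ->
  X = (fst B + s * fst (fold_dir B A C), snd B + s * snd (fold_dir B A C)) ->
  let S := cross (vsub B A) (vsub X A) / norm (vsub B A) in
  S * (norm (vsub C B) + norm (vsub C A) - norm (vsub B A)) = - cross (vsub B A) (vsub C A)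
  /\ dist_to_line X A B = Rabs S /\ dist_to_line X A C = Rabs S
  /\ dist_to_line X B A = Rabs S /\ dist_to_line X B C = Rabs S.
Proof.
  intros HK HA HB S.
  unfold nondegenerate in HK.
  assert (Hc : 0 < norm (vsub B A)) by (eapply norm_pos_cross; eauto).
  assert (Hb : 0 < norm (vsub C A)).
  { apply (norm_pos_cross _ (vsub B A)). unfold cross in *; lra. }
  assert (Ha : 0 < norm (vsub C B)).
  { apply (norm_pos_cross _ (vsub A B)). intro Z; apply HK.
    destruct A as [x1 x2], B as [y1 y2], C as [z1 z2]; unfold cross, vsub in *; simpl in *. lra. }
  assert (Hc' : 0 < norm (vsub A B)) by (rewrite norm_sym; auto).
  pose proof (fold_line_eq A C B X t Hb Hc HA) as EA.
  pose proof (fold_line_eq B A C X s Hc' Ha HB) as EB.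
  rewrite (norm_sym A B) in EB.
  assert (I1 : cross (vsub A B) (vsub X B) = - cross (vsub B A) (vsub X A)).
  { destruct A as [x1 x2], B as [y1 y2], X as [z1 z2]; unfold cross, vsub; simpl; ring. }
  assert (I2 : cross (vsub B A) (vsub X A) + cross (vsub C B) (vsub X B)
               - cross (vsub C A) (vsub X A) = cross (vsub B A) (vsub C A)).
  { destruct A as [x1 x2], B as [y1 y2], C as [u1 u2], X as [z1 z2]; unfold cross, vsub; simpl; ring. }
  rewrite I1 in EB.
  set (a := norm (vsub C B)) in *. set (b := norm (vsub C A)) in *. set (c := norm (vsub B A)) in *.
  set (kAB := cross (vsub B A) (vsub X A)) in *.
  set (kAC := cross (vsub C A) (vsub X A)) in *.
  set (kBC := cross (vsub C B) (vsub X B)) in *.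
  assert (SAC : kAC / b = S) by (unfold S; lra).
  assert (SBC : kBC / a = - S) by (unfold S; rewrite <- EB; field; lra).
  split; [|split; [|split; [|split]]].
  - rewrite <- I2.
    replace kAB with (S*c) by (unfold S; field; lra).
    replace kAC with (S*b) by (rewrite <- SAC; field; lra).
    replace kBC with (-S*a) by (rewrite <- SBC; field; lra). ring.
  - unfold dist_to_line. fold c kAB. rewrite Rabs_div_pos; auto.
  - unfold dist_to_line. fold b kAC. rewrite Rabs_div_pos; auto. rewrite SAC; auto.
  - unfold dist_to_line. rewrite I1, (norm_sym A B). fold c kAB. rewrite Rabs_div_pos; auto.
    unfold S. unfold Rdiv. rewrite Ropp_mult_distr_l_reverse, Rabs_Ropp. auto.
  - unfold dist_to_line. fold a kBC. rewrite Rabs_div_pos; auto. rewrite SBC, Rabs_Ropp; auto.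
Qed.

Lemma s3 : sqrt 3 * sqrt 3 = 3.
Proof. apply sqrt_sqrt; lra. Qed.
Lemma s3pos : 0 < sqrt 3.
Proof. apply sqrt_lt_R0; lra. Qed.

Lemma w_gt (w : R) : 1 / sqrt 3 < w -> 1 < 3 * w^2.
Proof.
  intros H. pose proof s3; pose proof s3pos.
  assert (1 < w * sqrt 3).
  { apply (Rmult_lt_compat_r (sqrt 3)) in H; auto.
    replace (1 / sqrt 3 * sqrt 3) with 1 in H by (field; lra). lra. }
  nra.
Qed.

Lemma w_lt (w : R) : 0 < w < 1 / sqrt 3 -> 3 * w^2 < 1.
Proof.
  intros [H0 H]. pose proof s3; pose proof s3pos.
  assert (w * sqrt 3 < 1).
  { apply (Rmult_lt_compat_r (sqrt 3)) in H; auto.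
    replace (1 / sqrt 3 * sqrt 3) with 1 in H by (field; lra). lra. }
  nra.
Qed.

Lemma part1_case (A B C : pt) (w : R) :
  nondegenerate A B C -> Len A B C = 1 ->
  norm (vsub B A) <= norm (vsub C B) -> norm (vsub B A) <= norm (vsub C A) ->
  1 / sqrt 3 < w ->
  exists X, fold_segment w A C B X /\ fold_segment w B A C X.
Proof.
  intros HK HL H1 H2 Hw.
  assert (Hw0 : 0 < w).
  { pose proof s3pos. assert (0 < 1 / sqrt 3) by (apply Rdiv_lt_0_compat; lra). lra. }
  apply w_gt in Hw.
  pose proof HK as HK'. unfold nondegenerate in HK'.
  assert (Hc : 0 < norm (vsub B A)) by (eapply norm_pos_cross; eauto).
  assert (Hb : 0 < norm (vsub C A)).
  { apply (norm_pos_cross _ (vsub B A)). unfold cross in *; lra. }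
  assert (Ha : 0 < norm (vsub C B)) by lra.
  unfold Len, Defs.dist in HL. rewrite (norm_sym A B), (norm_sym B C) in HL.
  pose proof (heron A B C) as HH. cbv zeta in HH.
  set (a := norm (vsub C B)) in *. set (b := norm (vsub C A)) in *. set (c := norm (vsub B A)) in *.
  set (K := cross (vsub B A) (vsub C A)) in *.
  set (D := a + b - c).
  assert (HD : 0 < D) by (unfold D; lra).
  set (X := ((a * fst A + b * fst B - c * fst C) / D, (a * snd A + b * snd B - c * snd C) / D)).
  assert (KA : cross (vsub C A) (vsub B A) <> 0).
  { intro Z; apply HK'. unfold K. destruct A, B, C; unfold cross, vsub in *; simpl in *; lra. }
  assert (KB : cross (vsub A B) (vsub C B) <> 0).
  { intro Z; apply HK'. unfold K. destruct A, B, C; unfold cross, vsub in *; simpl in *; lra. }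
  destruct (on_fold_line A C B X (-1/D) KA) as [t Ht].
  { fold b c. unfold X, D; destruct A, B, C; unfold vsub; simpl. field. lra. }
  { fold b c. unfold X, D; destruct A, B, C; unfold vsub; simpl. field. lra. }
  destruct (on_fold_line B A C X (1/D) KB) as [s Hs].
  { rewrite (norm_sym A B). fold a c. unfold X, D; destruct A, B, C; unfold vsub; simpl. field. lra. }
  { rewrite (norm_sym A B). fold a c. unfold X, D; destruct A, B, C; unfold vsub; simpl. field. lra. }
  destruct (both_lines A B C X t s HK Ht Hs) as [E [d1 [d2 [d3 d4]]]].
  set (S := cross (vsub B A) (vsub X A) / norm (vsub B A)) in *.
  fold a b c K D in E.
  assert (HS : Rabs S <= w / 2).
  { assert (E2 : 4 * (S*S) * D = (a-b+c)*(-a+b+c)).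
    { apply (Rmult_eq_reg_r D); [|lra].
      transitivity (4*(S*D)^2); [ring|]. rewrite E.
      replace (4 * (-K)^2) with (4*K^2) by ring. rewrite HH.
      replace (a+b+c) with 1 by lra. fold D. ring. }
    assert (E3 : 12 * (S*S) <= 1).
    { apply (Rmult_le_reg_r D); auto. rewrite Rmult_1_l.
      replace (12 * (S*S) * D) with (3 * ((a-b+c)*(-a+b+c))) by lra.
      assert (HD0 : D + (a-b+c) + (-a+b+c) = 1) by (unfold D; lra).
      set (y := a-b+c) in *. set (z := -a+b+c) in *.
      assert (HD1 : D * (D + y + z) = D) by (rewrite HD0; ring).
      assert (D >= y) by (unfold D, y; lra). assert (D >= z) by (unfold D, z; lra).
      assert (y + z >= 0) by (unfold y, z; lra).
      destruct (Rle_or_lt 0 y); destruct (Rle_or_lt 0 z); nra. }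
    pose proof (Rabs_pos S). pose proof (Rsqr_abs S). unfold Rsqr in *.
    nra. }
  exists X. split; split; eauto.
  - split; [rewrite d2 | rewrite d1]; auto.
  - split; [rewrite d3 | rewrite d4]; auto.
Qed.

Lemma part2_pair (A B C : pt) (w : R) :
  nondegenerate A B C -> equilateral A B C -> Len A B C = 1 ->
  0 < w < 1 / sqrt 3 ->
  forall X, ~ (fold_segment w A C B X /\ fold_segment w B A C X).
Proof.
  intros HK [Q1 Q2] HL Hw X [[[t Ht] [h1 h2]] [[s Hs] [h3 h4]]].
  apply w_lt in Hw.
  destruct (both_lines A B C X t s HK Ht Hs) as [E [d1 [d2 [d3 d4]]]].
  set (S := cross (vsub B A) (vsub X A) / norm (vsub B A)) in *.
  pose proof (heron A B C) as HH. cbv zeta in HH.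
  unfold Len, Defs.dist in HL, Q1, Q2. rewrite (norm_sym A B), (norm_sym B C) in *.
  set (a := norm (vsub C B)) in *. set (b := norm (vsub C A)) in *. set (c := norm (vsub B A)) in *.
  set (K := cross (vsub B A) (vsub C A)) in *.
  assert (a = 1/3) by lra. assert (b = 1/3) by lra. assert (c = 1/3) by lra.
  rewrite H, H0, H1 in E, HH.
  assert (12 * (S*S) = 1) by nra.
  rewrite d1 in h2.
  pose proof (Rabs_pos S). pose proof (Rsqr_abs S). unfold Rsqr in *. nra.
Qed.

Lemma nd_rot (A B C : pt) : nondegenerate A B C -> nondegenerate B C A.
Proof. unfold nondegenerate; destruct A, B, C; unfold cross, vsub; simpl; intros H Z; apply H; lra. Qed.
Lemma len_rot (A B C : pt) : Len A B C = 1 -> Len B C A = 1.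
Proof. unfold Len; lra. Qed.
Lemma eq_rot (A B C : pt) : equilateral A B C -> equilateral B C A.
Proof. unfold equilateral; lra. Qed.

Theorem theorem5p5 :
  (forall (A B C : pt) (w : R) (F : folding),
      nondegenerate A B C -> Len A B C = 1 ->
      folded_ribbon_ok A B C w ->
      (ribbon_Lk F = 1%Z \/ ribbon_Lk F = (-1)%Z) ->
      w <= 1 / sqrt 3)
  /\
  (forall (A B C : pt),
      nondegenerate A B C -> equilateral A B C -> Len A B C = 1 ->
      forall w : R, 0 < w < 1 / sqrt 3 -> folded_ribbon_ok A B C w).
Proof.
  split.
  - intros A B C w F HK HL [_ [O1 [O2 O3]]] _.
    destruct (Rle_or_lt w (1 / sqrt 3)) as [h|h]; auto. exfalso.
    pose proof (norm_sym A C) as s1.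
    destruct (Rle_or_lt (norm (vsub B A)) (norm (vsub C B))) as [c1|c1];
    destruct (Rle_or_lt (norm (vsub B A)) (norm (vsub C A))) as [c2|c2];
    destruct (Rle_or_lt (norm (vsub C B)) (norm (vsub C A))) as [c3|c3].
    all: try (destruct (part1_case A B C w HK HL c1 c2 h) as [X HX]; exact (O1 X HX)).
    all: try (assert (e1 : norm (vsub C B) <= norm (vsub A C)) by lra;
              assert (e2 : norm (vsub C B) <= norm (vsub A B)) by (rewrite (norm_sym A B); lra);
              destruct (part1_case B C A w (nd_rot _ _ _ HK) (len_rot _ _ _ HL) e1 e2 h) as [X HX];
              exact (O2 X HX)).
    all: try (assert (e1 : norm (vsub A C) <= norm (vsub B A)) by lra;
              assert (e2 : norm (vsub A C) <= norm (vsub B C)) by (rewrite (norm_sym B C); lra);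
              destruct (part1_case C A B w (nd_rot _ _ _ (nd_rot _ _ _ HK))
                 (len_rot _ _ _ (len_rot _ _ _ HL)) e1 e2 h) as [X HX];
              exact (O3 X HX)).
  - intros A B C HK HE HL w Hw. split; [lra|]. split; [|split].
    + apply part2_pair; auto.
    + apply part2_pair; auto using nd_rot, eq_rot, len_rot.
    + apply part2_pair; auto using nd_rot, eq_rot, len_rot.
Qed.
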